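(* Let $v,w$ be positive integers, $\theta\in[0,1]$, and let $K_{v,w}$ be the complete bipartite graph with parts $V$, $W$, $|V|=v$, $|W|=w$. For $1\le i\le 4$ let $P^i_m(K_{v,w})$ be the probability that the robber remains free after $m$ moves of the tipsy cop and drunken robber game when the game starts in Position $i$ (whenever that position exists). Then for all $m\ge 0$, \begin{align*} P_m^1(K_{v,w})&=\left(\tfrac{v-1}{v}\right)^{\lfloor\frac{m+3}{4}\rfloor}\left(\tfrac{w-1}{w}\right)^{\lfloor\frac{m+1}{4}\rfloor},\\ P_m^2(K_{v,w})&=\theta^{\lfloor\frac{m}{2}\rfloor}\left(\tfrac{v-1}{v}\right)^{\lfloor\frac{m}{4}\rfloor}\left(\tfrac{w-1}{w}\right)^{\lfloor\frac{m+2}{4}\rfloor},\\ P_m^3(K_{v,w})&=\left(\tfrac{v-1}{v}\right)^{\lfloor\frac{m+1}{4}\rfloor}\left(\tfrac{w-1}{w}\right)^{\lfloor\frac{m+3}{4}\rfloor},\\ P_m^4(K_{v,w})&=\theta^{\lfloor\frac{m}{2}\rfloor}\left(\tfrac{v-1}{v}\right)^{\lfloor\frac{m+2}{4}\rfloor}\left(\tfrac{w-1}{w}\right)^{\lfloor\frac{m}{4}\rfloor}. \end{align*}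
   Context: Tipsy cop and drunken robber game on a finite connected graph $G$: a cop and a robber are placed at distinct vertices. Moves are numbered $1,2,3,\dots$; the robber makes the odd-numbered moves and the cop the even-numbered moves, and on each move the mover must move to a vertex adjacent to its current vertex (staying put is not allowed). The robber always moves to a neighbor chosen uniformly at random. The cop, independently at each of her moves, with probability $\theta$ moves to a neighbor chosen uniformly at random, and with probability $1-\theta$ makes a directed move to a neighbor lying on a shortest path to the robber's current vertex (in particular onto the robber's vertex if it is adjacent). All random choices are independent. The robber is captured (and the game ends) as soon as both occupy the same vertex. Starting positions on $K_{v,w}$: Position 1: the cop is at a vertex of $V$ and the robber at a vertex of $W$; Position 2: cop and robber are at two distinct vertices of $V$; Position 3: the robber is at a vertex of $V$ and the cop at a vertex of $W$; Position 4: cop and robber are at two distinct vertices of $W$. *)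

(* Defs.v *)
From mathcomp Require Import all_boot all_order all_algebra.
Set Implicit Arguments. Unset Strict Implicit. Unset Printing Implicit Defensive.
Import Order.TTheory GRing.Theory Num.Theory.
Local Open Scope ring_scope.

(* Generic tipsy cop / drunken robber game on a finite graph (T, adj),
   adj a symmetric irreflexive relation. *)
Section Game.
Variables (T : finType) (adj : rel T) (R : realFieldType) (theta : R).

Fixpoint ball (k : nat) (x : T) : {set T} :=
  match k with
  | 0 => [set x]
  | k'.+1 => ball k' x :|: [set u | [exists y in ball k' x, adj y u]]
  end.

(* graph distance (equal to #|T| if y is unreachable from x) *)
Definition gdist (x y : T) : nat :=
  find (fun k => y \in ball k x) (iota 0 #|T|).

Definition nbrs (x : T) : {set T} := [set u | adj x u].

Definition dir_nbrs (c r : T) : {set T} :=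
  [set u | adj c u && ((gdist u r).+1 == gdist c r)%N].

Definition avg (S : {set T}) (f : T -> R) : R :=
  (\sum_(u in S) f u) / #|S|%:R.

(* surv m rturn c r = probability that the robber is still free after m
   further moves, cop at c, robber at r (c <> r), with the next move being
   the robber's iff rturn. *)
Fixpoint surv (m : nat) (rturn : bool) (c r : T) : R :=
  match m with
  | 0 => 1
  | m'.+1 =>
    if rturn then
      avg (nbrs r) (fun r' => if r' == c then 0 else surv m' false c r')
    else
      theta * avg (nbrs c) (fun c' => if c' == r then 0 else surv m' true c' r)
      + (1 - theta) *
        avg (dir_nbrs c r) (fun c' => if c' == r then 0 else surv m' true c' r)
  end.

(* probability the robber is free after m moves; move 1 is the robber's *)
Definition Pfree (m : nat) (c r : T) : R := surv m true c r.

End Game.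

(* complete bipartite graph K_{v,w}: V = inl 'I_v, W = inr 'I_w *)
Definition Kvw_vertex (v w : nat) : finType := ('I_v + 'I_w)%type.

Definition Kvw_adj (v w : nat) : rel (Kvw_vertex v w) :=
  fun x y => match x, y with
             | inl _, inr _ => true
             | inr _, inl _ => true
             | _, _ => false
             end.

(* Main.v *)
Require Import Defs.
From mathcomp Require Import all_boot all_order all_algebra zify ring.
Import Order.TTheory GRing.Theory Num.Theory.
Local Open Scope ring_scope.

Lemma gdist_eq (T : finType) (adj : rel T) (x y : T) (k : nat) :
  (k < #|T|)%N -> y \in ball adj k x -> (forall j, (j < k)%N -> y \notin ball adj j x) ->
  gdist adj x y = k.
Proof.
move=> kT yk ylt; rewrite /gdist.
set p := (fun k0 => y \in ball adj k0 x).
have hk : has p (iota 0 #|T|).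
  by apply/hasP; exists k; [rewrite mem_iota /= add0n | ].
have [lt|ge] := ltnP (find p (iota 0 #|T|)) k.
  have := nth_find 0%N hk; rewrite nth_iota ?add0n; last by move: hk; rewrite has_find size_iota.
  by rewrite /p; move/negP: (ylt _ lt).
rewrite leq_eqVlt in ge; case/orP: ge => [/eqP -> //|gt].
have := before_find 0%N gt; rewrite nth_iota ?add0n //.
  by rewrite /p yk.
Qed.

Lemma gdist0 (T : finType) (adj : rel T) (x y : T) :
  gdist adj x y = 0%N -> x = y.
Proof.
rewrite /gdist; have: (0 < #|T|)%N by apply/card_gt0P; exists x.
case: #|T| => [|n] //= _.
by rewrite !inE; case: eqP.
Qed.
Lemma avg_const (T : finType) (R : realFieldType) (S : {set T}) (f : T -> R) k x0 :
  x0 \in S -> {in S, forall x, f x = k} -> avg S f = k.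
Proof.
move=> x0S fk; rewrite /avg (eq_bigr (fun=> k)) // sumr_const.
have: (0 < #|S|)%N by apply/card_gt0P; exists x0.
move=> h; rewrite -[k *+ _]mulr_natr mulfK // pnatr_eq0; lia.
Qed.

Lemma avg_zero (T : finType) (R : realFieldType) (S : {set T}) (f : T -> R) :
  {in S, forall x, f x = 0} -> avg S f = 0.
Proof. by move=> f0; rewrite /avg big1 ?mul0r. Qed.

Lemma avg_minus (T : finType) (R : realFieldType) (S : {set T}) (f : T -> R) k c :
  c \in S -> f c = 0 -> {in S, forall x, x != c -> f x = k} ->
  avg S f = k * ((#|S|%:R - 1) / #|S|%:R).
Proof.
move=> cS fc fk; rewrite /avg (bigD1 c) //= fc add0r.
rewrite (eq_bigr (fun=> k)); last by move=> x /andP[xS xc]; apply: fk.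


rewrite (eq_bigl (fun i => i \in S :\ c)); last by move=> i; rewrite in_setD1 andbC.
rewrite sumr_const (cardsD1 c S) cS add1n.
have : (#|S :\ c|.+1)%:R != 0 :> R by rewrite pnatr_eq0.
move=> nz; rewrite -mulr_natr mulrA; congr (_ / _); rewrite -addn1 natrD; ring.
Qed.

Lemma cardK (v w : nat) : #|Kvw_vertex v w| = (v + w)%N.
Proof. by rewrite card_sum !card_ord. Qed.

Lemma nbrsL_mem (v w : nat) (i : 'I_v) u :
  (u \in nbrs (@Kvw_adj v w) (inl i)) = (if u is inr _ then true else false).
Proof. by rewrite inE; case: u. Qed.

Lemma nbrsR_mem (v w : nat) (j : 'I_w) u :
  (u \in nbrs (@Kvw_adj v w) (inr j)) = (if u is inl _ then true else false).
Proof. by rewrite inE; case: u. Qed.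

Lemma card_nbrsL (v w : nat) (i : 'I_v) : #|nbrs (@Kvw_adj v w) (inl i)| = w.
Proof.
have -> : nbrs (@Kvw_adj v w) (inl i) = [set inr j | j in [set: 'I_w]].
  apply/setP => u; rewrite nbrsL_mem; case: u => [x|x].
    by apply/esym/imsetP => -[y _].
  by apply/esym/imsetP; exists x.
by rewrite card_imset ?cardsT ?card_ord //; move=> x y [].
Qed.

Lemma card_nbrsR (v w : nat) (j : 'I_w) : #|nbrs (@Kvw_adj v w) (inr j)| = v.
Proof.
have -> : nbrs (@Kvw_adj v w) (inr j) = [set inl i | i in [set: 'I_v]].
  apply/setP => u; rewrite nbrsR_mem; case: u => [x|x].
    by apply/esym/imsetP; exists x.
  by apply/esym/imsetP => -[y _].
by rewrite card_imset ?cardsT ?card_ord //; move=> x y [].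
Qed.

Lemma gdist_LR (v w : nat) (i : 'I_v) (j : 'I_w) :
  gdist (@Kvw_adj v w) (inl i) (inr j) = 1%N.
Proof.
apply: gdist_eq.
- rewrite cardK; case: i; case: j => /=; lia.
- rewrite /= !inE; apply/orP; right; apply/existsP; exists (inl i); by rewrite !inE eqxx.
- by case=> // _; rewrite /= inE.
Qed.

Lemma gdist_RL (v w : nat) (i : 'I_v) (j : 'I_w) :
  gdist (@Kvw_adj v w) (inr j) (inl i) = 1%N.
Proof.
apply: gdist_eq.
- rewrite cardK; case: i; case: j => /=; lia.
- rewrite /= !inE; apply/orP; right; apply/existsP; exists (inr j); by rewrite !inE eqxx.
- by case=> // _; rewrite /= inE.
Qed.

Lemma gdist_LL (v w : nat) (i i' : 'I_v) (j0 : 'I_w) : i != i' ->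
  gdist (@Kvw_adj v w) (inl i) (inl i') = 2%N.
Proof.
move=> ii; apply: gdist_eq.
- rewrite cardK; move: ii; case: i => [m Hm]; case: i' => [n Hn]; case: j0 => [k Hk].
  rewrite -val_eqE /=; lia.
- rewrite /= !inE; apply/orP; right; apply/existsP; exists (inr j0).
  rewrite !inE /= andbT; apply/existsP; exists (inl i); by rewrite !inE eqxx.
- case=> [|[|//]] _ /=; rewrite !inE.
    by apply/eqP => -[] /eqP; rewrite eq_sym (negbTE ii).
  apply/negP => /orP[]; first by move/eqP => -[] /eqP; rewrite eq_sym (negbTE ii).
  by case/existsP => y /andP[]; rewrite inE => /eqP ->.
Qed.

Lemma gdist_RR (v w : nat) (j j' : 'I_w) (i0 : 'I_v) : j != j' ->
  gdist (@Kvw_adj v w) (inr j) (inr j') = 2%N.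
Proof.
move=> jj; apply: gdist_eq.
- rewrite cardK; move: jj; case: j => [m Hm]; case: j' => [n Hn]; case: i0 => [k Hk].
  rewrite -val_eqE /=; lia.
- rewrite /= !inE; apply/orP; right; apply/existsP; exists (inl i0).
  rewrite !inE /= andbT; apply/existsP; exists (inr j); by rewrite !inE eqxx.
- case=> [|[|//]] _ /=; rewrite !inE.
    by apply/eqP => -[] /eqP; rewrite eq_sym (negbTE jj).
  apply/negP => /orP[]; first by move/eqP => -[] /eqP; rewrite eq_sym (negbTE jj).
  by case/existsP => y /andP[]; rewrite inE => /eqP ->.
Qed.

Lemma dir_LL (v w : nat) (i i' : 'I_v) (j : 'I_w) : i != i' ->
  inr j \in dir_nbrs (@Kvw_adj v w) (inl i) (inl i').
Proof. by move=> ii; rewrite inE /= (@gdist_LL _ _ _ _ j ii) gdist_RL. Qed.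

Lemma dir_RR (v w : nat) (j j' : 'I_w) (i : 'I_v) : j != j' ->
  inl i \in dir_nbrs (@Kvw_adj v w) (inr j) (inr j').
Proof. by move=> jj; rewrite inE /= (@gdist_RR _ _ _ _ i jj) gdist_LR. Qed.

Lemma dir_LR (v w : nat) (i : 'I_v) (j : 'I_w) u :
  u \in dir_nbrs (@Kvw_adj v w) (inl i) (inr j) -> u = inr j.
Proof. by rewrite inE gdist_LR => /andP[_ /eqP [] /gdist0]. Qed.

Lemma dir_RL (v w : nat) (i : 'I_v) (j : 'I_w) u :
  u \in dir_nbrs (@Kvw_adj v w) (inr j) (inl i) -> u = inl i.
Proof. by rewrite inE gdist_RL => /andP[_ /eqP [] /gdist0]. Qed.


Lemma S_LR_true (v w : nat) (R : realFieldType) (theta : R) m (i : 'I_v) (j : 'I_w) k :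
  (forall i', i' != i -> surv (@Kvw_adj v w) theta m false (inl i) (inl i') = k) ->
  surv (@Kvw_adj v w) theta m.+1 true (inl i) (inr j) = k * ((v%:R - 1) / v%:R).
Proof.
move=> H /=; rewrite (@avg_minus _ _ _ _ k (inl i)) ?card_nbrsR ?nbrsR_mem ?eqxx //.
by case=> [x|x]; rewrite ?nbrsR_mem //= => _ ne; rewrite (negbTE ne) H //; apply: contraNneq ne => ->.
Qed.

Lemma S_RL_true (v w : nat) (R : realFieldType) (theta : R) m (i : 'I_v) (j : 'I_w) k :
  (forall j', j' != j -> surv (@Kvw_adj v w) theta m false (inr j) (inr j') = k) ->
  surv (@Kvw_adj v w) theta m.+1 true (inr j) (inl i) = k * ((w%:R - 1) / w%:R).
Proof.
move=> H /=; rewrite (@avg_minus _ _ _ _ k (inr j)) ?card_nbrsL ?nbrsL_mem ?eqxx //.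
by case=> [x|x]; rewrite ?nbrsL_mem //= => _ ne; rewrite (negbTE ne) H //; apply: contraNneq ne => ->.
Qed.

Lemma S_LL_false (v w : nat) (R : realFieldType) (theta : R) m (i i' : 'I_v) (j0 : 'I_w) k :
  i != i' ->
  (forall j, surv (@Kvw_adj v w) theta m true (inr j) (inl i') = k) ->
  surv (@Kvw_adj v w) theta m.+1 false (inl i) (inl i') = k.
Proof.
move=> ii H /=.
rewrite (@avg_const _ _ _ _ k (inr j0)) ?nbrsL_mem //; last by case=> [x|x]; rewrite ?nbrsL_mem //= => _; rewrite H.
rewrite (@avg_const _ _ _ _ k (inr j0)) ?dir_LL //; first by ring.
by case=> [x|x] //; rewrite inE /= ?H // => /andP[].
Qed.

Lemma S_RR_false (v w : nat) (R : realFieldType) (theta : R) m (j j' : 'I_w) (i0 : 'I_v) k :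
  j != j' ->
  (forall i, surv (@Kvw_adj v w) theta m true (inl i) (inr j') = k) ->
  surv (@Kvw_adj v w) theta m.+1 false (inr j) (inr j') = k.
Proof.
move=> jj H /=.
rewrite (@avg_const _ _ _ _ k (inl i0)) ?nbrsR_mem //; last by case=> [x|x]; rewrite ?nbrsR_mem //= => _; rewrite H.
rewrite (@avg_const _ _ _ _ k (inl i0)) ?dir_RR //; first by ring.
by case=> [x|x] //; rewrite inE /= ?H // => /andP[].
Qed.

Lemma S_LR_false (v w : nat) (R : realFieldType) (theta : R) m (i : 'I_v) (j : 'I_w) k :
  (forall j', j' != j -> surv (@Kvw_adj v w) theta m true (inr j') (inr j) = k) ->
  surv (@Kvw_adj v w) theta m.+1 false (inl i) (inr j) = theta * (k * ((w%:R - 1) / w%:R)).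
Proof.
move=> H /=.
rewrite (@avg_minus _ _ _ _ k (inr j)) ?card_nbrsL ?nbrsL_mem ?eqxx //; last first.
  by case=> [x|x]; rewrite ?nbrsL_mem //= => _ ne; rewrite (negbTE ne) H //; apply: contraNneq ne => ->.
rewrite avg_zero ?mulr0 ?addr0 //.
by move=> u /dir_LR ->; rewrite eqxx.
Qed.

Lemma S_RL_false (v w : nat) (R : realFieldType) (theta : R) m (i : 'I_v) (j : 'I_w) k :
  (forall i', i' != i -> surv (@Kvw_adj v w) theta m true (inl i') (inl i) = k) ->
  surv (@Kvw_adj v w) theta m.+1 false (inr j) (inl i) = theta * (k * ((v%:R - 1) / v%:R)).
Proof.
move=> H /=.
rewrite (@avg_minus _ _ _ _ k (inl i)) ?card_nbrsR ?nbrsR_mem ?eqxx //; last first.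
  by case=> [x|x]; rewrite ?nbrsR_mem //= => _ ne; rewrite (negbTE ne) H //; apply: contraNneq ne => ->.
rewrite avg_zero ?mulr0 ?addr0 //.
by move=> u /dir_RL ->; rewrite eqxx.
Qed.

Lemma S_LL_true (v w : nat) (R : realFieldType) (theta : R) m (i i' : 'I_v) (j0 : 'I_w) k :
  (forall j, surv (@Kvw_adj v w) theta m false (inl i) (inr j) = k) ->
  surv (@Kvw_adj v w) theta m.+1 true (inl i) (inl i') = k.
Proof.
move=> H /=; rewrite (@avg_const _ _ _ _ k (inr j0)) ?nbrsL_mem //.
by case=> [x|x]; rewrite ?nbrsL_mem ?nbrsR_mem //= => _; rewrite H.
Qed.

Lemma S_RR_true (v w : nat) (R : realFieldType) (theta : R) m (j j' : 'I_w) (i0 : 'I_v) k :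
  (forall i, surv (@Kvw_adj v w) theta m false (inr j) (inl i) = k) ->
  surv (@Kvw_adj v w) theta m.+1 true (inr j) (inr j') = k.
Proof.
move=> H /=; rewrite (@avg_const _ _ _ _ k (inl i0)) ?nbrsR_mem //.
by case=> [x|x]; rewrite ?nbrsL_mem ?nbrsR_mem //= => _; rewrite H.
Qed.

Theorem mainTheorem4 (R : realFieldType) (v w : nat) (theta : R) :
  (0 < v)%N -> (0 < w)%N -> 0 <= theta <= 1 ->
  let P := @Pfree (Kvw_vertex v w) (@Kvw_adj v w) R theta in
  let a := (v%:R - 1) / v%:R : R in
  let b := (w%:R - 1) / w%:R : R in
  forall m : nat,
  (* Position 1: cop in V, robber in W *)
  (forall (i : 'I_v) (j : 'I_w),
     P m (inl i) (inr j) = a ^+ ((m + 3) %/ 4) * b ^+ ((m + 1) %/ 4)) /\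
  (* Position 2: cop and robber at distinct vertices of V *)
  (forall (i i' : 'I_v), i != i' ->
     P m (inl i) (inl i') =
       theta ^+ (m %/ 2) * a ^+ (m %/ 4) * b ^+ ((m + 2) %/ 4)) /\
  (* Position 3: robber in V, cop in W *)
  (forall (i : 'I_v) (j : 'I_w),
     P m (inr j) (inl i) = a ^+ ((m + 1) %/ 4) * b ^+ ((m + 3) %/ 4)) /\
  (* Position 4: cop and robber at distinct vertices of W *)
  (forall (j j' : 'I_w), j != j' ->
     P m (inr j) (inr j') =
       theta ^+ (m %/ 2) * a ^+ ((m + 2) %/ 4) * b ^+ (m %/ 4)).
Proof.
move=> hv hw _ P a b.
pose i0 : 'I_v := Ordinal hv.
pose j0 : 'I_w := Ordinal hw.
pose Sv := surv (@Kvw_adj v w) theta.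
pose F1 m := a ^+ ((m + 3) %/ 4) * b ^+ ((m + 1) %/ 4).
pose F2 m := theta ^+ (m %/ 2) * a ^+ (m %/ 4) * b ^+ ((m + 2) %/ 4).
pose F3 m := a ^+ ((m + 1) %/ 4) * b ^+ ((m + 3) %/ 4).
pose F4 m := theta ^+ (m %/ 2) * a ^+ ((m + 2) %/ 4) * b ^+ (m %/ 4).
pose Q m := [/\ (forall i j, Sv m true (inl i) (inr j) = F1 m),
  (forall i i', i != i' -> Sv m true (inl i) (inl i') = F2 m),
  (forall i j, Sv m true (inr j) (inl i) = F3 m) &
  (forall j j', j != j' -> Sv m true (inr j) (inr j') = F4 m)].
have step : forall m, Q m -> Q m.+2.
  move=> m [H1 H2 H3 H4]; rewrite /Q /Sv in H1 H2 H3 H4 *; split.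
  - move=> i j; rewrite (@S_LR_true _ _ _ _ _ _ _ (F3 m)); last first.
      move=> i' ne; apply: (@S_LL_false _ _ _ _ _ _ _ j) => //.
      by rewrite eq_sym.
    rewrite /F1 /F3.
    have -> : ((m.+2 + 3) %/ 4 = ((m + 1) %/ 4).+1)%N by lia.
    have -> : ((m.+2 + 1) %/ 4 = ((m + 3) %/ 4))%N by lia.
    by rewrite exprS -/a; ring.
  - move=> i i' ne; rewrite (@S_LL_true _ _ _ _ _ _ _ j0 (theta * (F4 m * b))) //.
      rewrite /F2 /F4.
      have -> : ((m.+2) %/ 2 = (m %/ 2).+1)%N by lia.
      have -> : ((m.+2 + 2) %/ 4 = (m %/ 4).+1)%N by lia.
      by rewrite !exprS ?addn2; ring.
    by move=> j; apply: S_LR_false => j' ne'; apply: H4.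
  - move=> i j; rewrite (@S_RL_true _ _ _ _ _ _ _ (F1 m)); last first.
      move=> j' ne; apply: (@S_RR_false _ _ _ _ _ _ _ i) => //; first by rewrite eq_sym.
    rewrite /F1 /F3.
    have -> : ((m.+2 + 3) %/ 4 = ((m + 1) %/ 4).+1)%N by lia.
    have -> : ((m.+2 + 1) %/ 4 = ((m + 3) %/ 4))%N by lia.
    by rewrite exprS -/b; ring.
  - move=> j j' ne; rewrite (@S_RR_true _ _ _ _ _ _ _ i0 (theta * (F2 m * a))) //.
      rewrite /F2 /F4.
      have -> : ((m.+2) %/ 2 = (m %/ 2).+1)%N by lia.
      have -> : ((m.+2 + 2) %/ 4 = (m %/ 4).+1)%N by lia.
      by rewrite !exprS ?addn2; ring.
    by move=> i; apply: S_RL_false => i' ne'; apply: H2.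
have Q0 : Q 0%N by split => *; rewrite /F1 /F2 /F3 /F4 /= ?expr0 ?mulr1.
have Q1 : Q 1%N.
  rewrite /Q /Sv; split.
  - move=> i j; rewrite (@S_LR_true _ _ _ _ _ _ _ 1) // /F1 /=.
    by rewrite expr1 expr0 mulr1 mul1r.
  - move=> i i' ne; rewrite (@S_LL_true _ _ _ _ _ _ _ j0 1) //.
    by rewrite /F2 /= !expr0 !mulr1.
  - move=> i j; rewrite (@S_RL_true _ _ _ _ _ _ _ 1) // /F3 /=.
    all: try by rewrite ?expr1 ?expr0 ?mulr1 ?mul1r.
  - move=> j j' ne; rewrite (@S_RR_true _ _ _ _ _ _ _ i0 1) //.
    by rewrite /F4 /= !expr0 !mulr1.
have all : forall m, Q m /\ Q m.+1.
  elim=> [|m [Qm Qm1]]; first by split.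
  by split => //; apply: step.
move=> m; have [[H1 H2 H3 H4] _] := all m.
by split; [exact: H1 | split; [exact: H2 | split; [exact: H3 | exact: H4]]].
Qed.
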